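(* Let $N\ge 1$, let $\mathbf{A}=(A_{ij})\in\mathbb{R}^{N\times N}$ with $A_{ij}\ge 0$ for $i\neq j$ and $A_{ii}=0$, let $D_i=\sum_{j=1}^N A_{ij}$, $\mathbf{D}=\operatorname{diag}(D_1,\dots,D_N)$, let $\beta_1,\dots,\beta_N>0$, and set $\mathbf{H}=\mathbf{A}-\mathbf{D}-\operatorname{diag}(\beta_1,\dots,\beta_N)$. Then for all $k,m\in\{1,\dots,N\}$ and every positive integer $p$: $[\mathbf{H}^{-p}]_{km}\ge 0$ if $p$ is even and $[\mathbf{H}^{-p}]_{km}\le 0$ if $p$ is odd. Moreover, if $[\mathbf{H}^{-p}]_{km}=0$, then node $k$ cannot be reached from node $m$, i.e. there is no directed walk $m=w_0,w_1,\dots,w_n=k$ with $A_{w_{t+1}w_t}>0$ for all $t$.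
   Context: The directed graph associated with $\mathbf{A}$ has an edge from node $j$ to node $i$ iff $A_{ij}>0$. $\mathbf{H}$ is strictly diagonally dominant with negative diagonal, hence invertible. *)

(* Defs.v *)
From HB Require Import structures.
From mathcomp Require Import all_boot all_order all_algebra.
Set Implicit Arguments. Unset Strict Implicit. Unset Printing Implicit Defensive.
Import Order.TTheory GRing.Theory Num.Theory.
Local Open Scope ring_scope.

(* Nodes are 'I_n.+1, i.e. N = n.+1 >= 1 nodes. *)

Definition Dmat (R : realFieldType) (n : nat) (A : 'M[R]_n.+1) : 'M[R]_n.+1 :=
  diag_mx (\row_i \sum_j A i j).

Definition Hmat (R : realFieldType) (n : nat) (A : 'M[R]_n.+1)
  (beta : 'I_n.+1 -> R) : 'M[R]_n.+1 :=
  A - Dmat A - diag_mx (\row_i beta i).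

Definition edge_rel (R : realFieldType) (n : nat) (A : 'M[R]_n.+1) : rel 'I_n.+1 :=
  fun j i => 0 < A i j.

(* Main.v *)
Require Import Defs.
From HB Require Import structures.
From mathcomp Require Import all_boot all_order all_algebra.
From mathcomp Require Import ring lra.
Import Order.TTheory GRing.Theory Num.Theory.
Local Open Scope ring_scope.

Lemma Hrow (R : realFieldType) (n : nat) (A : 'M[R]_n.+1)
  (beta : 'I_n.+1 -> R) k (x : 'I_n.+1 -> R) :
  \sum_j Hmat A beta k j * x j =
  \sum_j A k j * x j - (\sum_l A k l + beta k) * x k.
Proof.
have E : forall j, Hmat A beta k j * x j =
   A k j * x j - ((\sum_l A k l + beta k) * x k) *+ (k == j).
  move=> j; rewrite /Hmat /Dmat !mxE; case: eqVneq => [->|_]; rewrite ?mulr1n ?mulr0n; ring.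
rewrite (eq_bigr _ (fun j _ => E j)) sumrB; congr (_ - _).
set s := \sum_l A k l.
by rewrite (bigD1 k) //= eqxx mulr1n big1 ?addr0 // => j /negbTE; rewrite eq_sym => ->.
Qed.

Lemma key_of (R : realFieldType) (n : nat) (A : 'M[R]_n.+1)
  (beta : 'I_n.+1 -> R) (y c : 'I_n.+1 -> R) :
  (forall k, \sum_j Hmat A beta k j * y j = - c k) ->
  forall k, (\sum_l A k l + beta k) * y k = c k + \sum_j A k j * y j.
Proof.
move=> h k.
have -> : c k = - (\sum_j Hmat A beta k j * y j) by rewrite h opprK.
rewrite Hrow; ring.
Qed.

Lemma le_sum1 (R : realFieldType) (n : nat) (F : 'I_n.+1 -> R) j :
  (forall i, 0 <= F i) -> F j <= \sum_i F i.
Proof.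
move=> h; rewrite (bigD1 j) //= lerDl; apply: sumr_ge0 => i _; exact: h.
Qed.

Lemma minprin (R : realFieldType) (n : nat) (A : 'M[R]_n.+1)
  (beta : 'I_n.+1 -> R) (y c : 'I_n.+1 -> R) :
  (forall i j, 0 <= A i j) -> (forall i, 0 < beta i) -> (forall i, 0 <= c i) ->
  (forall k, (\sum_l A k l + beta k) * y k = c k + \sum_j A k j * y j) ->
  forall i, 0 <= y i.
Proof.
move=> A0 hb hc key.
case: (@arg_minP _ R _ ord0 xpredT y isT) => r _ Hr.
suff h0 : 0 <= y r by move=> i; exact: le_trans h0 (Hr i isT).
have hS : (\sum_j A r j) * y r <= \sum_j A r j * y j.
  rewrite mulr_suml; apply: ler_sum => j _; apply: ler_wpM2l => //; exact: Hr.
have E : beta r * y r = c r + (\sum_j A r j * y j - (\sum_j A r j) * y r).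
  have := key r; move=> K; rewrite addrA -K; ring.
rewrite -(pmulr_rge0 _ (hb r)) E addr_ge0 // subr_ge0 //.
Qed.

Lemma pospropag (R : realFieldType) (n : nat) (A : 'M[R]_n.+1)
  (beta : 'I_n.+1 -> R) (y c : 'I_n.+1 -> R) :
  (forall i j, 0 <= A i j) -> (forall i, 0 < beta i) -> (forall i, 0 <= c i) ->
  (forall k, (\sum_l A k l + beta k) * y k = c k + \sum_j A k j * y j) ->
  (forall i, 0 <= y i) ->
  forall i j, 0 < y j -> 0 < A i j -> 0 < y i.
Proof.
move=> A0 hb hc key y0 i j yj Aij.
have hD : 0 < \sum_l A i l + beta i by rewrite ltr_wpDl // sumr_ge0.
rewrite -(pmulr_rgt0 _ hD) key.
apply: lt_le_trans (_ : 0 < A i j * y j) _; first exact: mulr_gt0.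
apply: le_trans (_ : \sum_l A i l * y l <= _); last by rewrite lerDr.
apply: (@le_sum1 R n (fun l => A i l * y l)) => l; exact: mulr_ge0.
Qed.

Theorem lemma2 (R : realFieldType) (n : nat) (A : 'M[R]_n.+1)
  (beta : 'I_n.+1 -> R)
  (hoff : forall i j : 'I_n.+1, i != j -> 0 <= A i j)
  (hdiag : forall i : 'I_n.+1, A i i = 0)
  (hbeta : forall i : 'I_n.+1, 0 < beta i)
  (k m : 'I_n.+1) (p : nat) (hp : (0 < p)%N) :
  (~~ odd p -> 0 <= (invmx (Hmat A beta) ^+ p) k m) /\
  (odd p -> (invmx (Hmat A beta) ^+ p) k m <= 0) /\
  ((invmx (Hmat A beta) ^+ p) k m = 0 -> ~ connect (edge_rel A) m k).
Proof.
have A0 : forall i j, 0 <= A i j.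
  by move=> i j; case: (eqVneq i j) => [->|/hoff//]; rewrite hdiag.
set H := Hmat A beta.
have Hunit : H \in unitmx.
  rewrite -unitmx_tr -row_free_unit -kermx_eq0.
  apply/eqP/row_matrixP => i; rewrite row0.
  set v := row i _.
  have hv : v *m H^T = 0 by apply/sub_kermxP; rewrite row_sub.
  have hy : forall k, \sum_j H k j * v 0 j = - 0.
    move=> k'; rewrite oppr0.
    have := congr1 (fun M : 'M[R]_(1, n.+1) => M 0 k') hv; rewrite !mxE => E.
    by apply: etrans E; apply: eq_bigr => j _; rewrite [H^T j k']mxE mulrC.
  have hy' : forall k, \sum_j H k j * (- v 0 j) = - 0.
    by move=> k0; rewrite (eq_bigr _ (fun j _ => mulrN _ _)) sumrN hy !oppr0.
  have c0 : forall i : 'I_n.+1, (0:R) <= (fun _ => 0) i by [].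
  have P1 := @minprin _ _ A beta _ (fun _ => 0) A0 hbeta c0 (@key_of _ _ A beta _ (fun _ => 0) hy).
  have P2 := @minprin _ _ A beta _ (fun _ => 0) A0 hbeta c0 (@key_of _ _ A beta _ (fun _ => 0) hy').
  apply/rowP => j; rewrite [RHS]mxE; apply/eqP.
  by rewrite eq_le -oppr_ge0 P2 P1.
set X := invmx H.
have HX : H *m X = 1%:M by rewrite mulmxV.
set Y := - X.
have keyY : forall m0, forall k0,
   (\sum_l A k0 l + beta k0) * Y k0 m0 = (k0 == m0)%:R + \sum_j A k0 j * Y j m0.
  move=> m0; apply: (@key_of _ _ A beta (fun j => Y j m0)) => k0.
  rewrite (eq_bigr (fun j => - (H k0 j * X j m0))); last by move=> j _; rewrite [Y j m0]mxE mulrN.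
  rewrite sumrN; congr (- _).
  by have := congr1 (fun M : 'M[R]_n.+1 => M k0 m0) HX; rewrite !mxE.
have cpos : forall m0 (i : 'I_n.+1), (0:R) <= (i == m0)%:R by move=> *; rewrite ler0n.
have Y0 : forall i j, 0 <= Y i j.
  by move=> i j; exact: (@minprin _ _ A beta (fun i => Y i j) _ A0 hbeta (cpos j) (keyY j)).
have Ypos : forall m0 k0, connect (edge_rel A) m0 k0 -> 0 < Y k0 m0.
  move=> m0 k0 /connectP [q hq ->].
  have hm : 0 < Y m0 m0.
    have hD : 0 < \sum_l A m0 l + beta m0 by rewrite ltr_wpDl // sumr_ge0.
    rewrite -(pmulr_rgt0 _ hD) keyY eqxx.
    by apply: lt_le_trans (ltr01) _; rewrite lerDl sumr_ge0 // => j _; rewrite mulr_ge0.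
  have prop := @pospropag _ _ A beta (fun i => Y i m0) _ A0 hbeta (cpos m0) (keyY m0) (fun i => Y0 i m0).
  have gen : forall q x, 0 < Y x m0 -> path (edge_rel A) x q -> 0 < Y (last x q) m0.
    elim=> [|a q' IH] x hx //= /andP [ea hq']; apply: IH hq'; exact: prop a x hx ea.
  exact: gen q m0 hm hq.
have Zge : forall q i j, 0 <= (Y ^+ q) i j.
  elim=> [|q IH] i j; first by rewrite expr0 -[1]/(1%:M) mxE ler0n.
  rewrite exprSr -mulmxE mxE; apply: sumr_ge0 => l _; exact: mulr_ge0.
have Zpos : forall q, 0 < Y k m -> 0 < Y m m -> 0 < (Y ^+ q.+1) k m.
  move=> q hkm hmm; elim: q => [|q IH]; first by rewrite expr1.
  rewrite exprSr -mulmxE mxE.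
  apply: lt_le_trans (_ : 0 < (Y^+q.+1) k m * Y m m) _; first exact: mulr_gt0.
  apply: (@le_sum1 R n (fun l => (Y^+q.+1) k l * Y l m)) => l; exact: mulr_ge0.
have XY : X = (-1) *: Y by rewrite scaleN1r opprK.
have XP : (X ^+ p) k m = (-1)^+p * (Y^+p) k m by rewrite XY exprZn mxE.
rewrite XP; split; [|split].
- move=> ev; rewrite -signr_odd (negbTE ev) expr0 mul1r; exact: Zge.
- move=> od; rewrite -signr_odd od expr1 mulN1r oppr_le0; exact: Zge.
- move=> h0 hc.
  have hmm := Ypos m m (connect0 _ _).
  case: p hp h0 XP => // p' _ h0 _.
  have := Zpos p' (Ypos m k hc) hmm.
  move: h0 => /eqP; rewrite mulf_eq0 signr_eq0 /= => /eqP ->.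
  by rewrite ltxx.
Qed.
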